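(* Let $R$ be a commutative filtered ring and let $(M[i],\mu_i)$ be a compact-continuous-Hausdorff ray-representation, and let $i\in\mathbb{N}$. Then: (1) if $m\in M[i+1]$, then $\widetilde{\mu}_{i+1}m$ is closed in $M[i]$, and it is a linear variety if it is non-empty; (2) if $N$ is a closed submodule of $M[i+1]$, then $\widetilde{\mu}_{i+1}N$ is a closed submodule of $M[i]$. Consequently, $\bigcap_{i\ge0}\widetilde{\mu}_{\le i}M[i]$ equals the set of $m\in M[0]$ for which there exists $(m_i)\in\prod_{i\ge0}M[i]$ with $m_0=m$ and $(m_i,m_{i-1})\in\widetilde{\mu}_i$ for all $i>0$.
   Context: $R$ is filtered by a descending chain of ideals $R_n$ ($n\ge0$) with $R_pR_q\subseteq R_{p+q}$; a filtered $R$-module $M$ has a descending chain of submodules $M_n$ with $R_pM_q\subseteq M_{p+q}$, and carries the topology where the sets $m+M_n$ form a fundamental system of neighbourhoods of $m$. A linear variety is a coset $m+N$ of a submodule; $M$ is linearly compact if every family of closed linear varieties with the finite intersection property has nonempty intersection. A ray-representation: $R$-modules $M[i]$ ($i\ge0$) and, for $i\ge1$, a sign $\sigma_i\in\{+,-\}$ and an $R$-linear map $\mu_i\colon M[i]\to M[i-1]$ if $\sigma_i=-$, $\mu_i\colon M[i-1]\to M[i]$ if $\sigma_i=+$ (the restriction of a binary-tree diagram to a ray). It is compact-continuous-Hausdorff if each $M[i]$ is filtered and linearly compact, each $\mu_i$ is continuous, and $\bigcap_nM_n[i]=0$. The relation $\widetilde{\mu}_i\subseteq M[i]\oplus M[i-1]$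 is $\{(x,\mu_i(x)):x\in M[i]\}$ if $\sigma_i=-$ and $\{(\mu_i(y),y):y\in M[i-1]\}$ if $\sigma_i=+$; for $x\in M[i]$, $\widetilde{\mu}_ix=\{y:(x,y)\in\widetilde{\mu}_i\}$ and $\widetilde{\mu}_iS=\bigcup_{x\in S}\widetilde{\mu}_ix$. For $S\subseteq M[n]$, $\widetilde{\mu}_{\le n}S$ is the set of $m_0\in M[0]$ for which there exist $m_i\in M[i]$ ($1\le i\le n$) with $m_n\in S$ and $(m_i,m_{i-1})\in\widetilde{\mu}_i$; $\widetilde{\mu}_{\le0}S=S$. *)

(* Defs.v *)
From Stdlib Require List.
From HB Require Import structures.
From mathcomp Require Import all_boot all_algebra.
Set Implicit Arguments. Unset Strict Implicit. Unset Printing Implicit Defensive.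
Import GRing.Theory.
Local Open Scope ring_scope.

Definition is_ideal (R : comNzRingType) (I : R -> Prop) : Prop :=
  I 0 /\ (forall x y, I x -> I y -> I (x + y)) /\ (forall r x, I x -> I (r * x)).

Definition ring_filtration (R : comNzRingType) (Rf : nat -> R -> Prop) : Prop :=
  (forall n, is_ideal (Rf n)) /\
  (forall n x, Rf n.+1 x -> Rf n x) /\
  (forall p q a b, Rf p a -> Rf q b -> Rf (p + q)%N (a * b)).

Definition is_submod (R : comNzRingType) (A : lmodType R) (N : A -> Prop) : Prop :=
  N 0 /\ (forall x y, N x -> N y -> N (x + y)) /\ (forall (r : R) x, N x -> N (r *: x)).

Definition mod_filtration (R : comNzRingType) (Rf : nat -> R -> Prop)
    (A : lmodType R) (F : nat -> A -> Prop) : Prop :=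
  (forall n, is_submod (F n)) /\
  (forall n x, F n.+1 x -> F n x) /\
  (forall p q (r : R) (x : A), Rf p r -> F q x -> F (p + q)%N (r *: x)).

(* Topology: the sets m + F n form a fundamental system of nbhds of m. *)
Definition f_open (R : comNzRingType) (A : lmodType R) (F : nat -> A -> Prop)
    (U : A -> Prop) : Prop :=
  forall x, U x -> exists n, forall y, F n (y - x) -> U y.

Definition f_closed (R : comNzRingType) (A : lmodType R) (F : nat -> A -> Prop)
    (S : A -> Prop) : Prop :=
  f_open F (fun x => ~ S x).

Definition f_continuous (R : comNzRingType) (A B : lmodType R)
    (FA : nat -> A -> Prop) (FB : nat -> B -> Prop) (f : A -> B) : Prop :=
  forall x n, exists k, forall y, FA k (y - x) -> FB n (f y - f x).

Definition linear_variety (R : comNzRingType) (A : lmodType R) (S : A -> Prop) : Prop :=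
  exists (m : A) (N : A -> Prop), is_submod N /\ forall x, S x <-> N (x - m).

Definition linearly_compact (R : comNzRingType) (A : lmodType R)
    (F : nat -> A -> Prop) : Prop :=
  forall Fam : (A -> Prop) -> Prop,
    (forall S, Fam S -> f_closed F S /\ linear_variety S) ->
    (forall s : list (A -> Prop), (forall S, List.In S s -> Fam S) ->
        exists x, forall S, List.In S s -> S x) ->
    exists x, forall S, Fam S -> S x.

(* The sign sigma i (i >= 1) is encoded as a bool:
   true = '+', false = '-'.  mu i is the map mu_{i+1} between M i and M (i+1):
   if sigma (i+1) = '+' it is a linear map M i -> M (i+1),
   if sigma (i+1) = '-' it is a linear map M (i+1) -> M i. *)
Definition ray_map (R : comNzRingType) (s : bool) (A B : lmodType R) : Type :=
  if s then {linear A -> B} else {linear B -> A}.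

(* The relation mu~ ⊆ B ⊕ A (B = M[i+1], A = M[i]). *)
Definition ray_rel (R : comNzRingType) (s : bool) (A B : lmodType R)
    : ray_map s A B -> B -> A -> Prop :=
  match s as b return ray_map b A B -> B -> A -> Prop with
  | true => fun f x y => x = f y
  | false => fun f x y => y = f x
  end.

Definition ray_cont (R : comNzRingType) (s : bool) (A B : lmodType R)
    (FA : nat -> A -> Prop) (FB : nat -> B -> Prop) : ray_map s A B -> Prop :=
  match s as b return ray_map b A B -> Prop with
  | true => fun f => f_continuous FA FB f
  | false => fun f => f_continuous FB FA f
  end.

Definition rel_img (R : comNzRingType) (M : nat -> lmodType R) (sigma : nat -> bool)
    (mu : forall i, ray_map (sigma i.+1) (M i) (M i.+1)) (i : nat)
    (S : M i.+1 -> Prop) : M i -> Prop :=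
  fun y => exists x, S x /\ ray_rel (mu i) x y.

Definition rel_img_le (R : comNzRingType) (M : nat -> lmodType R) (sigma : nat -> bool)
    (mu : forall i, ray_map (sigma i.+1) (M i) (M i.+1)) (n : nat)
    (S : M n -> Prop) : M 0 -> Prop :=
  fun m0 => exists m : forall i, M i,
    m 0%N = m0 /\ S (m n) /\ (forall i, (i < n)%N -> ray_rel (mu i) (m i.+1) (m i)).

Definition ccH_ray (R : comNzRingType) (Rf : nat -> R -> Prop)
    (M : nat -> lmodType R) (MF : forall i, nat -> M i -> Prop) (sigma : nat -> bool)
    (mu : forall i, ray_map (sigma i.+1) (M i) (M i.+1)) : Prop :=
  (forall i, mod_filtration Rf (MF i)) /\
  (forall i, linearly_compact (MF i)) /\
  (forall i, ray_cont (MF i) (MF i.+1) (mu i)) /\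
  (forall i x, (forall n, MF i n x) -> x = 0).

(* Main.v *)
Require Import Defs.
From HB Require Import structures.
From mathcomp Require Import all_boot all_algebra.
From Stdlib Require Import Classical ClassicalEpsilon Eqdep_dec PeanoNat.
Set Implicit Arguments. Unset Strict Implicit. Unset Printing Implicit Defensive.
Import GRing.Theory.
Local Open Scope ring_scope.

Definition hausd (R : comNzRingType) (A : lmodType R) (F : nat -> A -> Prop) :=
  forall x, (forall n, F n x) -> x = 0.

Lemma sub_opp (R : comNzRingType) (A : lmodType R) (N : A -> Prop) :
  is_submod N -> forall x, N x -> N (- x).
Proof. move=> [h0 [hD hZ]] x hx. rewrite -scaleN1r. exact: hZ. Qed.

Lemma sub_sub (R : comNzRingType) (A : lmodType R) (N : A -> Prop) :
  is_submod N -> forall x y, N x -> N y -> N (x - y).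
Proof. move=> hN x y hx hy. case: (hN) => _ [hD _]. apply: hD => //. exact: sub_opp. Qed.

Lemma f_closed_ext (R : comNzRingType) (A : lmodType R) (F : nat -> A -> Prop) (P Q : A -> Prop) :
  (forall x, P x <-> Q x) -> f_closed F P -> f_closed F Q.
Proof.
move=> hPQ hP x hx. have hx' : ~ P x by move=> /hPQ.
have [n hn] := hP x hx'. exists n => y hy /hPQ. exact: hn.
Qed.

Lemma lv_ext (R : comNzRingType) (A : lmodType R) (P Q : A -> Prop) :
  (forall x, P x <-> Q x) -> linear_variety P -> linear_variety Q.
Proof.
move=> hPQ [m [N [hN h]]]. exists m, N; split => // x.
split => [/hPQ/h //|/h/hPQ //].
Qed.

Lemma submod_ext (R : comNzRingType) (A : lmodType R) (P Q : A -> Prop) :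
  (forall x, P x <-> Q x) -> is_submod P -> is_submod Q.
Proof.
move=> hPQ [h0 [hD hZ]]. split; first by apply/hPQ.
split=> [x y /hPQ hx /hPQ hy|r x /hPQ hx]; apply/hPQ; auto.
Qed.

Lemma closed_single (R : comNzRingType) (A : lmodType R) (F : nat -> A -> Prop) :
  (forall n, is_submod (F n)) -> hausd F -> forall c, f_closed F (fun x => x = c).
Proof.
move=> hF hH c x hx.
have : ~ (forall n, F n (x - c)).
  move=> hall. apply: hx. apply/eqP. rewrite -subr_eq0. apply/eqP. exact: hH.
move=> /not_all_ex_not [n hn]. exists n => y hy hyc. subst y.
apply: hn. rewrite -opprB. exact: sub_opp.
Qed.

Lemma closed_preim (R : comNzRingType) (A B : lmodType R) (FA : nat -> A -> Prop)
  (FB : nat -> B -> Prop) (f : A -> B) (S : B -> Prop) :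
  f_continuous FA FB f -> f_closed FB S -> f_closed FA (fun a => S (f a)).
Proof.
move=> hc hS x hx. have [n hn] := hS (f x) hx. have [k hk] := hc x n.
exists k => y hy. exact: hn _ (hk _ hy).
Qed.

Lemma lv_single (R : comNzRingType) (A : lmodType R) (c : A) :
  linear_variety (fun x => x = c).
Proof.
exists c, (fun z => z = 0). split.
  split=> //. split=> [x y -> ->|r x ->]; by rewrite ?addr0 ?scaler0.
move=> x; split=> [->|/eqP]; first by rewrite subrr.
by rewrite subr_eq0 => /eqP.
Qed.

Lemma lv_fiber (R : comNzRingType) (A B : lmodType R) (f : {linear A -> B}) b :
  (exists a, f a = b) -> linear_variety (fun x => f x = b).
Proof.
move=> [a0 ha0]. exists a0, (fun z => f z = 0). split.
  split; first by rewrite linear0.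
  split=> [x y hx hy|r x hx].
  rewrite linearD hx hy addr0 //.
  by rewrite linearZ_LR hx scaler0.
move=> x; rewrite linearB ha0; split=> [->|/eqP]; first by rewrite subrr.
by rewrite subr_eq0 => /eqP.
Qed.

Lemma lv_submod (R : comNzRingType) (A : lmodType R) (N : A -> Prop) :
  is_submod N -> linear_variety N.
Proof. move=> hN. exists 0, N; split => // x. by rewrite subr0. Qed.

Lemma desc_le (R : comNzRingType) (A : lmodType R) (F : nat -> A -> Prop) :
  (forall n x, F n.+1 x -> F n x) -> forall n k x, (n <= k)%N -> F k x -> F n x.
Proof.
move=> hd n k x; elim: k => [|k IH]; first by rewrite leqn0 => /eqP ->.
rewrite leq_eqVlt => /orP [/eqP -> //| hlt] hk. apply: IH => //. exact: hd.
Qed.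

Lemma lc_apply (R : comNzRingType) (A : lmodType R) (F : nat -> A -> Prop)
  (V : A -> Prop) (P : nat -> A -> Prop) :
  linearly_compact F -> f_closed F V -> linear_variety V ->
  (forall n, f_closed F (P n) /\ linear_variety (P n)) ->
  (forall K, exists z, V z /\ forall n, (n <= K)%N -> P n z) ->
  exists z, V z /\ forall n, P n z.
Proof.
move=> hLC hV1 hV2 hP hfin.
have := hLC (fun S => S = V \/ exists n, S = P n).
case.
- by move=> S [->|[n ->]].
- move=> l hl.
  have [K hK] : exists K, forall S, List.In S l -> S = V \/ exists n, (n <= K)%N /\ S = P n.
    elim: l hl => [|a l IH] hl; first by exists 0%N.
    have [K hK] := IH (fun S h => hl S (or_intror h)).
    case: (hl a (or_introl erefl)) => [ha|[n ha]].
      exists K => S [<-|hS]; [by left|exact: hK].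
    exists (maxn K n) => S [<-|hS]; first by right; exists n; rewrite leq_maxr.
    case: (hK S hS) => [->|[k [hk ->]]]; [by left|right; exists k].
    split=> //. exact: (leq_trans hk (leq_maxl _ _)).
  have [z [hz1 hz2]] := hfin K. exists z => S /hK [->//|[n [hn ->]]]. exact: hz2.
- move=> z hz. exists z. split; first exact: hz (or_introl erefl).
  move=> n. exact: hz _ (or_intror (ex_intro _ n erefl)).
Qed.

Lemma L4 (V : zmodType) (a b c : V) : a - c = (a - b) + (b - c).
Proof. by rewrite addrA subrK. Qed.
Lemma L3 (V : zmodType) (a b c : V) : a - b = (a - c) - (b - c).
Proof. by rewrite (@L4 _ a c b) opprB. Qed.
Lemma L2 (V : zmodType) (a x y : V) : a - x = (y - x) - (y - a).
Proof. by rewrite (@L4 _ a y x) opprB addrC. Qed.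

Lemma closed_image (R : comNzRingType) (A B : lmodType R) (FA : nat -> A -> Prop)
  (FB : nat -> B -> Prop) (f : {linear B -> A}) (N : B -> Prop) :
  (forall n, is_submod (FA n)) -> (forall n x, FA n.+1 x -> FA n x) -> hausd FA ->
  linearly_compact FB -> f_continuous FB FA f -> is_submod N -> f_closed FB N ->
  f_closed FA (fun y => exists x, N x /\ y = f x).
Proof.
move=> hF hd hH hLC hc hN hNc x hx. apply: NNPP => hneg.
have hall : forall n, exists z, N z /\ FA n (f z - x).
  move=> n. apply: NNPP => hn. apply: hneg. exists n => y hy [z [hz hyz]].
  apply: hn; exists z; split => //. by rewrite -hyz.
have hP : forall n, f_closed FB (fun z => FA n (f z - x)) /\ linear_variety (fun z => FA n (f z - x)).
move=> n; split.
  apply: (closed_preim (S := fun a => FA n (a - x))) => //.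
  move=> a ha. exists n => y hy hyx. apply: ha.
  rewrite (@L2 _ a x y).
  exact: sub_sub.
have [z0 [_ hz0]] := hall n.
exists z0, (fun w => FA n (f w)). split.
  case: (hF n) => h0 [hD hZ]. split; first by rewrite linear0.
  split=> [u v hu hv|r u hu]; first by rewrite linearD; auto.
  rewrite linearZ_LR; auto.
move=> w. rewrite linearB. split=> hw.
  rewrite (@L3 _ (f w) (f z0) x).
  exact: sub_sub.
rewrite (@L4 _ (f w) (f z0) x).
by case: (hF n) => _ [hD _]; auto.
have hfin : forall K, exists z, N z /\ forall n, (n <= K)%N -> FA n (f z - x).
  move=> K. have [z [h1 h2]] := hall K. exists z; split => // n hn. exact: desc_le hd n K _ hn h2.
have [z [hz1 hz2]] := lc_apply hLC hNc (lv_submod hN) hP hfin.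
apply: hx. exists z; split => //. apply/eqP. rewrite eq_sym -subr_eq0. apply/eqP. exact: hH.
Qed.

Lemma gen_part1 (R : comNzRingType) (A B : lmodType R) (FA : nat -> A -> Prop)
  (FB : nat -> B -> Prop) (s : bool) (f : ray_map s A B) (m : B) :
  (forall n, is_submod (FA n)) -> hausd FA ->
  (forall n, is_submod (FB n)) -> hausd FB -> ray_cont FA FB f ->
  f_closed FA (fun y => exists x, x = m /\ ray_rel f x y) /\
  ((exists y, exists x, x = m /\ ray_rel f x y) ->
     linear_variety (fun y => exists x, x = m /\ ray_rel f x y)).
Proof.
move=> hFA hHA hFB hHB. case: s f => /= f hc.
  split.
    apply: (f_closed_ext (P := fun y => f y = m)).
      by move=> y; split=> [h|[x [-> h]]]; [exists m|].
    exact: (closed_preim hc (closed_single (c := m) hFB hHB)).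
  move=> [y [x [hx hy]]]. apply: (lv_ext (P := fun y => f y = m)).
    by move=> y'; split=> [h|[x' [-> h]]]; [exists m|].
  apply: lv_fiber. exists y. by rewrite -hy.
split.
  apply: (f_closed_ext (P := fun y => y = f m)).
    by move=> y; split=> [h|[x [-> h]]]; [exists m|].
  exact: closed_single.
move=> _. apply: (lv_ext (P := fun y => y = f m)).
  by move=> y; split=> [h|[x [-> h]]]; [exists m|].
exact: lv_single.
Qed.

Lemma gen_fiber (R : comNzRingType) (A B : lmodType R) (FA : nat -> A -> Prop)
  (FB : nat -> B -> Prop) (s : bool) (f : ray_map s A B) (x : A) :
  (forall n, is_submod (FA n)) -> hausd FA ->
  (forall n, is_submod (FB n)) -> hausd FB -> ray_cont FA FB f ->
  (exists y, ray_rel f y x) ->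
  f_closed FB (fun y => ray_rel f y x) /\ linear_variety (fun y => ray_rel f y x).
Proof.
move=> hFA hHA hFB hHB. case: s f => /= f hc hex.
  split; [exact: closed_single|exact: lv_single].
split.
  apply: (f_closed_ext (P := fun y => f y = x)); first by move=> y; split.
  exact: (closed_preim hc (closed_single (c := x) hFA hHA)).
apply: (lv_ext (P := fun y => f y = x)); first by move=> y; split.
apply: lv_fiber. case: hex => y hy. by exists y.
Qed.

Lemma gen_part2 (R : comNzRingType) (A B : lmodType R) (FA : nat -> A -> Prop)
  (FB : nat -> B -> Prop) (s : bool) (f : ray_map s A B) (N : B -> Prop) :
  (forall n, is_submod (FA n)) -> (forall n x, FA n.+1 x -> FA n x) -> hausd FA ->
  (forall n, is_submod (FB n)) -> hausd FB -> linearly_compact FB ->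
  ray_cont FA FB f -> is_submod N -> f_closed FB N ->
  is_submod (fun y => exists x, N x /\ ray_rel f x y) /\
  f_closed FA (fun y => exists x, N x /\ ray_rel f x y).
Proof.
move=> hFA hdA hHA hFB hHB hLC. case: s f => /= f hc hN hNc.
  have e : forall y, N (f y) <-> exists x, N x /\ x = f y.
    by move=> y; split=> [h|[x [hx <-]]]; [exists (f y)|].
  split; last exact: (f_closed_ext e (closed_preim hc hNc)).
  apply: (submod_ext e). case: hN => h0 [hD hZ].
  split; first by rewrite linear0.
  split=> [u v hu hv|r u hu]; [rewrite linearD|rewrite linearZ_LR]; auto.
split; last exact: (closed_image hFA hdA hHA hLC hc hN hNc).
case: hN => h0 [hD hZ].
split; first by exists 0; rewrite linear0.
split=> [u v [x [hx ->]] [y [hy ->]]|r u [x [hx ->]]].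
  exists (x + y); split; [auto|by rewrite linearD].
exists (r *: x); split; [auto|by rewrite linearZ_LR].
Qed.

Definition upd (R : comNzRingType) (M : nat -> lmodType R) (m : forall j, M j) (i : nat) (x : M i)
  : forall j, M j :=
  fun j => match Nat.eq_dec i j with
           | left e => eq_rect i (fun j => M j : Type) x j e
           | right _ => m j end.

Lemma upd_eq (R : comNzRingType) (M : nat -> lmodType R) (m : forall j, M j) i (x : M i) :
  upd m x i = x.
Proof.
rewrite /upd. destruct (Nat.eq_dec i i) as [e|n]; last by case: n.
by rewrite (UIP_refl_nat _ e).
Qed.

Lemma upd_neq (R : comNzRingType) (M : nat -> lmodType R) (m : forall j, M j) i (x : M i) j :
  i <> j -> upd m x j = m j.
Proof. rewrite /upd => h. by destruct (Nat.eq_dec i j). Qed.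

Definition Reach (R : comNzRingType) (M : nat -> lmodType R) (sigma : nat -> bool)
  (mu : forall i, ray_map (sigma i.+1) (M i) (M i.+1)) (i k : nat) (x : M i) : Prop :=
  exists m : forall j, M j, m i = x /\
    forall j, (i <= j)%N -> (j < k)%N -> ray_rel (mu j) (m j.+1) (m j).
Arguments Reach {R M sigma} mu i k x.

Lemma Reach_triv (R : comNzRingType) (M : nat -> lmodType R) (sigma : nat -> bool)
  (mu : forall i, ray_map (sigma i.+1) (M i) (M i.+1)) i k (x : M i) :
  (k <= i)%N -> Reach mu i k x.
Proof.
move=> hk. exists (upd (fun j => 0) x). split; first exact: upd_eq.
move=> j hij hjk. have := leq_trans hjk hk.
by rewrite ltnNge hij.
Qed.

Lemma Reach_mono (R : comNzRingType) (M : nat -> lmodType R) (sigma : nat -> bool)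
  (mu : forall i, ray_map (sigma i.+1) (M i) (M i.+1)) i k k' (x : M i) :
  (k <= k')%N -> Reach mu i k' x -> Reach mu i k x.
Proof.
move=> hk [m [h1 h2]]. exists m; split => // j hij hjk. apply: h2 => //.
exact: leq_trans hjk hk.
Qed.

Lemma Reach_step (R : comNzRingType) (M : nat -> lmodType R) (sigma : nat -> bool)
  (mu : forall i, ray_map (sigma i.+1) (M i) (M i.+1)) i k (x : M i) :
  (i < k)%N ->
  (Reach mu i k x <-> exists y, Reach mu i.+1 k y /\ ray_rel (mu i) y x).
Proof.
move=> hik; split.
  move=> [m [h1 h2]]. exists (m i.+1); split.
    exists m; split => // j hij hjk. apply: h2 => //. exact: ltnW.
  rewrite -h1. exact: h2.
move=> [y [[m [h1 h2]] h3]]. exists (upd m x); split; first exact: upd_eq.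
move=> j hij hjk. case: (eqVneq j i) => [->|hne].
  rewrite upd_eq upd_neq; last exact: n_Sn.
  by rewrite h1.
have hij' : (i < j)%N by rewrite ltn_neqAle eq_sym hne hij.
rewrite !upd_neq.
- exact: h2.
- move=> e. move: hij'. by rewrite e ltnn.
- move=> e. move: hij'. by rewrite e ltnNge leqnSn.
Qed.

Lemma Reach_closed (R : comNzRingType) (Rf : nat -> R -> Prop)
    (M : nat -> lmodType R) (MF : forall i, nat -> M i -> Prop)
    (sigma : nat -> bool) (mu : forall i, ray_map (sigma i.+1) (M i) (M i.+1)) :
  ccH_ray Rf MF mu ->
  forall d i, is_submod (Reach mu i (i + d)) /\ f_closed (MF i) (Reach mu i (i + d)).
Proof.
move=> [hfilt [hlc [hcont hH]]].
elim=> [|d IH] i.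
  have e : forall x : M i, True <-> Reach mu i (i + 0) x.
    move=> x; split=> // _. apply: Reach_triv. by rewrite addn0.
  split.
    apply: (submod_ext e). done.
  apply: (f_closed_ext e). move=> x hx. done.
have [hN hNc] := IH i.+1.
have [hFA [hdA _]] := hfilt i. have [hFB [hdB _]] := hfilt i.+1.
have [h1 h2] := gen_part2 hFA hdA (hH i) hFB (hH i.+1) (hlc i.+1) (hcont i) hN hNc.
have e : forall x, (exists y, Reach mu i.+1 (i.+1 + d) y /\ ray_rel (mu i) y x)
                   <-> Reach mu i (i + d.+1) x.
  move=> x. rewrite addSnnS. symmetry. apply: Reach_step. by rewrite addnS ltnS leq_addr.
split; [exact: (submod_ext e)|exact: (f_closed_ext e)].
Qed.

Lemma Reach_next (R : comNzRingType) (Rf : nat -> R -> Prop)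
    (M : nat -> lmodType R) (MF : forall i, nat -> M i -> Prop)
    (sigma : nat -> bool) (mu : forall i, ray_map (sigma i.+1) (M i) (M i.+1)) :
  ccH_ray Rf MF mu ->
  forall i (x : M i), (forall k, Reach mu i k x) ->
  exists y : M i.+1, (forall k, Reach mu i.+1 k y) /\ ray_rel (mu i) y x.
Proof.
move=> H i x hx.
have [hfilt [hlc [hcont hH]]] := H.
have [hFA _] := hfilt i. have [hFB _] := hfilt i.+1.
have hex : exists y, ray_rel (mu i) y x.
  have := hx i.+1. rewrite Reach_step // => -[y [_ hy]]. by exists y.
have [hV1 hV2] := gen_fiber hFA (hH i) hFB (hH i.+1) (hcont i) hex.
have hP : forall n, f_closed (MF i.+1) (Reach mu i.+1 (i.+1 + n)) /\
                    linear_variety (Reach mu i.+1 (i.+1 + n)).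
  move=> n. have [h1 h2] := Reach_closed H n i.+1. split => //. exact: lv_submod.
have hfin : forall K, exists z, ray_rel (mu i) z x /\
    forall n, (n <= K)%N -> Reach mu i.+1 (i.+1 + n) z.
  move=> K. have := hx (i.+1 + K). rewrite Reach_step; last by rewrite ltnS leq_addr.
  move=> [y [hy1 hy2]]. exists y; split => // n hn.
  apply: Reach_mono hy1. by rewrite leq_add2l.
have [y [hy1 hy2]] := lc_apply (hlc i.+1) hV1 hV2 hP hfin.
exists y; split => // k. apply: Reach_mono (hy2 k). exact: leq_addl.
Qed.

Theorem lemma5p16 (R : comNzRingType) (Rf : nat -> R -> Prop)
    (M : nat -> lmodType R) (MF : forall i, nat -> M i -> Prop)
    (sigma : nat -> bool) (mu : forall i, ray_map (sigma i.+1) (M i) (M i.+1)) :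
  ring_filtration Rf ->
  ccH_ray Rf MF mu ->
  (forall (i : nat) (m : M i.+1),
      f_closed (MF i) (rel_img mu (fun x => x = m)) /\
      ((exists y, rel_img mu (fun x => x = m) y) ->
         linear_variety (rel_img mu (fun x => x = m)))) /\
  (forall (i : nat) (N : M i.+1 -> Prop),
      is_submod N -> f_closed (MF i.+1) N ->
      is_submod (rel_img mu N) /\ f_closed (MF i) (rel_img mu N)) /\
  (forall m : M 0%N,
      (forall i, rel_img_le mu (fun _ : M i => True) m) <->
      (exists ms : forall i, M i,
          ms 0%N = m /\ forall i, ray_rel (mu i) (ms i.+1) (ms i))).
Proof.
move=> _ H.
have [hfilt [hlc [hcont hH]]] := H.
split.
  move=> i m. have [hFA _] := hfilt i. have [hFB _] := hfilt i.+1.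
  exact: (gen_part1 m hFA (hH i) hFB (hH i.+1) (hcont i)).
split.
  move=> i N hN hNc. have [hFA [hdA _]] := hfilt i. have [hFB _] := hfilt i.+1.
  exact: (gen_part2 hFA hdA (hH i) hFB (hH i.+1) (hlc i.+1) (hcont i) hN hNc).
move=> m; split; last first.
  move=> [ms [h0 hr]] i. exists ms. split; first exact: h0. split; first done. move=> j _. exact: hr.
move=> hall.
have hm : forall k, Reach mu 0 k m.
  move=> k. have [ms [h0 [_ hr]]] := hall k. exists ms; split => // j _. exact: hr.
pose E i (x : M i) := forall k, Reach mu i k x.
have step : forall i (p : {x : M i | E i x}), {y : M i.+1 | E i.+1 y /\ ray_rel (mu i) y (proj1_sig p)}.
  move=> i [x hx]. apply: constructive_indefinite_description.
  have [y [h1 h2]] := Reach_next H hx. by exists y.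
pose g := nat_rect (fun i => {x : M i | E i x}) (exist _ m hm)
  (fun i p => let q := step i p in exist _ (proj1_sig q) (proj1 (proj2_sig q))).
exists (fun i => proj1_sig (g i)). split => // i.
exact: (proj2 (proj2_sig (step i (g i)))).
Qed.
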